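(* For any group $B$ and any integer $p\ge 2$, $$cw(B\wr C_p)\le \max(1,cw(B)).$$
   Context: $B\wr C_p$ is the permutational wreath product $B^p\rtimes C_p$, where the cyclic group $C_p$ acts on $\{1,\dots,p\}$ by the shift $(1,2,\dots,p)$. The commutator length of $g\in G'$ is the least $n$ such that $g$ is a product of $n$ commutators; the commutator width $cw(G)$ is the maximum of commutator lengths over elements of the derived subgroup $G'$. *)

(* Defs.v *)
From mathcomp Require Import all_boot all_algebra.
Set Implicit Arguments. Unset Strict Implicit. Unset Printing Implicit Defensive.
Import GRing.Theory.

Record group := Group {
  gcar :> Type;
  gmul : gcar -> gcar -> gcar;
  ginv : gcar -> gcar;
  gone : gcar;
  gmulA : forall x y z, gmul x (gmul y z) = gmul (gmul x y) z;
  gmul1 : forall x, gmul gone x = x;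
  gmulV : forall x, gmul (ginv x) x = gone
}.

Section Commutators.
Variables (T : Type) (mul : T -> T -> T) (inv : T -> T) (one : T).

Definition comm (x y : T) : T := mul (mul (inv x) (inv y)) (mul x y).

Inductive in_derived : T -> Prop :=
| der_comm x y : in_derived (comm x y)
| der_one : in_derived one
| der_mul x y : in_derived x -> in_derived y -> in_derived (mul x y)
| der_inv x : in_derived x -> in_derived (inv x).

Definition prod_comms (l : seq (T * T)) : T :=
  foldr (fun xy acc => mul (comm xy.1 xy.2) acc) one l.

Definition cw_le (n : nat) : Prop :=
  forall g, in_derived g -> exists l : seq (T * T), size l <= n /\ g = prod_comms l.
End Commutators.

(* The permutational wreath product B wr C_p = B^p x| C_p, C_p = Z/pZ acting on
   the coordinates 'Z_p by the shift i |-> i + a (use only with 1 < p). *)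
Section Wreath.
Variables (B : group) (p : nat).
Definition wr_car : Type := (('Z_p -> B) * 'Z_p)%type.
Definition wr_mul (x y : wr_car) : wr_car :=
  (fun i => gmul (x.1 i) (y.1 (i - x.2)%R), (x.2 + y.2)%R).
Definition wr_inv (x : wr_car) : wr_car :=
  (fun i => ginv (x.1 (i + x.2)%R), (- x.2)%R).
Definition wr_one : wr_car := (fun _ => gone B, 0%R).
End Wreath.

Definition cw_le_group (B : group) (n : nat) :=
  cw_le (@gmul B) (@ginv B) (gone B) n.
Definition cw_le_wreath (B : group) (p : nat) (n : nat) :=
  cw_le (@wr_mul B p) (@wr_inv B p) (wr_one B p) n.

(* Main.v *)
Require Import Defs.
From mathcomp Require Import all_boot all_algebra.
From Stdlib Require Import FunctionalExtensionality.
Set Implicit Arguments. Unset Strict Implicit. Unset Printing Implicit Defensive.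
Import GRing.Theory.

Section G.
Variable B : group.
Local Notation "x ** y" := (@gmul B x y) (at level 40, left associativity).
Local Notation iv := (@ginv B).
Local Notation e := (gone B).

Lemma g_mulKg (x y : B) : (iv x) ** (x ** y) = y.
Proof. by rewrite gmulA gmulV gmul1. Qed.
Lemma mulgV' (x : B) : x ** (iv x) = e.
Proof.
rewrite -{1}(gmul1 (x ** (iv x))) -{1}(gmulV (iv x)).
by rewrite -gmulA (gmulA (iv x) x (iv x)) gmulV gmul1 gmulV.
Qed.
Lemma mulg1' (x : B) : x ** e = x.
Proof. by rewrite -(gmulV x) gmulA mulgV' gmul1. Qed.
Lemma g_mulKVg (x y : B) : x ** ((iv x) ** y) = y.
Proof. by rewrite gmulA mulgV' gmul1. Qed.
Lemma g_inv_uniq (x y : B) : x ** y = e -> (iv x) = y.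
Proof. by move=> h; rewrite -(g_mulKg x y) h mulg1'. Qed.
Lemma g_invgK (x : B) : iv (iv x) = x.
Proof. by apply: g_inv_uniq; rewrite gmulV. Qed.
Lemma g_invMg (x y : B) : iv (x ** y) = (iv y) ** (iv x).
Proof. by apply: g_inv_uniq; rewrite -gmulA (gmulA y) mulgV' gmul1 mulgV'. Qed.
Lemma g_invg1 : (iv e) = e.
Proof. by apply: g_inv_uniq; rewrite gmul1. Qed.

Local Notation D := (in_derived (@gmul B) (@ginv B) (gone B)).
Local Notation cm := (comm (@gmul B) (@ginv B)).

Lemma D_conj a d : D d -> D (a ** d ** (iv a)).
Proof.
move=> hd.
have -> : a ** d ** (iv a) = cm (iv a) (iv d) ** d.
  by rewrite /comm !g_invgK -!gmulA gmulV mulg1'.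
by apply: der_mul => //; apply: der_comm.
Qed.

Definition eqv (a b : B) := D (a ** (iv b)).
Lemma eqv_refl a : eqv a a. Proof. by rewrite /eqv mulgV'; apply: der_one. Qed.
Lemma eqv_sym a b : eqv a b -> eqv b a.
Proof. by move=> h; have := der_inv h; rewrite g_invMg g_invgK. Qed.
Lemma eqv_trans a b c : eqv a b -> eqv b c -> eqv a c.
Proof. by move=> h1 h2; have := der_mul h1 h2; rewrite -gmulA g_mulKg. Qed.
Lemma eqv_mull c a a' : eqv a a' -> eqv (c ** a) (c ** a').
Proof.
move=> h; have := D_conj c h; by rewrite /eqv g_invMg !gmulA.
Qed.
Lemma eqv_mulr c a a' : eqv a a' -> eqv (a ** c) (a' ** c).
Proof. by move=> h; rewrite /eqv g_invMg -gmulA g_mulKVg. Qed.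
Lemma eqv_mul a a' b b' : eqv a a' -> eqv b b' -> eqv (a ** b) (a' ** b').
Proof. by move=> h1 h2; apply: eqv_trans (eqv_mulr _ h1) (eqv_mull _ h2). Qed.
Lemma eqv_C a b : eqv (a ** b) (b ** a).
Proof.
rewrite /eqv g_invMg; have := der_comm (@gmul B) (@ginv B) (gone B) (iv a) (iv b).
by rewrite /comm !g_invgK !gmulA.
Qed.
Lemma eqv_inv a a' : eqv a a' -> eqv (iv a) (iv a').
Proof.
move=> h; have := D_conj (iv a) (der_inv h).
by rewrite /eqv g_invMg g_invgK g_invgK -!gmulA gmulV mulg1'.
Qed.
Lemma eqvD a b : eqv a b -> D b -> D a.
Proof. by move=> h hb; have := der_mul h hb; rewrite -gmulA gmulV mulg1'. Qed.
Lemma eqv_A a b c : eqv (a ** (b ** c)) (a ** b ** c).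
Proof. by rewrite gmulA; apply: eqv_refl. Qed.
End G.

Section W.
Variables (B : group) (q : nat).
Local Notation p := q.+2.
Local Notation "x ** y" := (@gmul B x y) (at level 40, left associativity).
Local Notation iv := (@ginv B).
Local Notation e := (gone B).
Local Notation D := (in_derived (@gmul B) (@ginv B) (gone B)).
Local Notation Z := ('Z_p).

Definition L (f : Z -> B) (l : seq Z) := foldr (fun i acc => f i ** acc) e l.

Lemma Lcat f l1 l2 : L f (l1 ++ l2) = L f l1 ** L f l2.
Proof. elim: l1 => [|a l IH] /=; first by rewrite gmul1. by rewrite IH gmulA. Qed.

Lemma Lperm f l1 l2 : perm_eq l1 l2 -> eqv (L f l1) (L f l2).
Proof.
move=> h; apply: (@catCA_perm_ind _ (fun s => eqv (L f l1) (L f s))) h (eqv_refl _).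
move=> s1 s2 s3 H; apply: eqv_trans H _.
rewrite !Lcat; apply: eqv_trans (eqv_A _ _ _) _.
apply: eqv_trans (eqv_mulr _ (eqv_C _ _)) _.
by apply: eqv_sym; apply: eqv_A.
Qed.

Lemma Lmap f (g : Z -> Z) l : L f (map g l) = L (fun i => f (g i)) l.
Proof. by elim: l => //= a l ->. Qed.

Lemma Lmul f g l : eqv (L (fun i => f i ** g i) l) (L f l ** L g l).
Proof.
elim: l => [|a l IH] /=; first by rewrite gmul1; apply: eqv_refl.
apply: eqv_trans (eqv_mull _ IH) _.
rewrite -!gmulA; apply: eqv_mull.
rewrite !gmulA; apply: eqv_mulr; exact: eqv_C.
Qed.

Lemma Linv f l : eqv (L (fun i => iv (f i)) l) (iv (L f l)).
Proof.
elim: l => [|a l IH] /=; first by rewrite g_invg1; apply: eqv_refl.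
apply: eqv_trans (eqv_mull _ IH) _.
rewrite g_invMg; exact: eqv_C.
Qed.

Lemma L1 l : L (fun _ => e) l = e.
Proof. by elim: l => //= a l ->; rewrite gmul1. Qed.

Lemma eq_L f g l : {in l, f =1 g} -> L f l = L g l.
Proof.
elim: l => //= a l IH h; rewrite h ?mem_head // IH // => x hx.
by apply: h; rewrite in_cons hx orbT.
Qed.

Definition s n : seq Z := map (@inZp p.-1) (iota 0 n).

Lemma sS n : s n.+1 = s n ++ [:: inZp n].
Proof. by rewrite /s -[n.+1]addn1 iotaD map_cat. Qed.

Lemma LsS f n : L f (s n.+1) = L f (s n) ** f (inZp n).
Proof. by rewrite sS Lcat /= mulg1'. Qed.

Lemma s_uniq : uniq (s p).
Proof.
rewrite /s map_inj_in_uniq ?iota_uniq // => i j; rewrite !mem_iota /= => hi hj.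
move/(congr1 val) => /=; rewrite !modn_small //.
Qed.

Lemma s_mem (i : Z) : i \in s p.
Proof.
apply/mapP; exists (val i); last by rewrite valZpK.
by rewrite mem_iota /=.
Qed.

Lemma Lshift f (a : Z) : eqv (L (fun i => f (i + a)%R) (s p)) (L f (s p)).
Proof.
rewrite -Lmap; apply: Lperm; apply: uniq_perm (s_uniq) _...
- by rewrite map_inj_uniq ?s_uniq // => x y /addIr.
- move=> i; rewrite s_mem; apply/mapP; exists (i - a)%R; first exact: s_mem.
by rewrite subrK.
Qed.

Definition psi (w : wr_car B p) := L w.1 (s p).

Lemma psi_mul x y : eqv (psi (wr_mul x y)) (psi x ** psi y).
Proof.
rewrite /psi /=; apply: eqv_trans (Lmul x.1 (fun i => y.1 (i - x.2)%R) (s p)) _.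
apply: eqv_mull; exact: (Lshift y.1 (- x.2)%R).
Qed.

Lemma psi_inv x : eqv (psi (wr_inv x)) (iv (psi x)).
Proof.
rewrite /psi /=; apply: eqv_trans (Linv (fun i => x.1 (i + x.2)%R) (s p)) _.
apply: eqv_inv; exact: Lshift.
Qed.

Lemma derived_inv w : in_derived (@wr_mul B p) (@wr_inv B p) (wr_one B p) w ->
  w.2 = 0%R /\ D (psi w).
Proof.
elim => [x y| |x y _ [hx1 hx2] _ [hy1 hy2]| x _ [hx1 hx2]].
- split; first by rewrite /comm /= addrACA !addNr addr0.
  apply: eqvD (der_comm _ _ _ (psi x) (psi y)).
  rewrite /comm; apply: eqv_trans (psi_mul _ _) _.
  apply: eqv_mul; (apply: eqv_trans (psi_mul _ _) _; apply: eqv_mul) => //;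
    try exact: eqv_refl; exact: psi_inv.
- by split => //; rewrite /psi L1; apply: der_one.
- split; first by rewrite /= hx1 hy1 addr0.
  by apply: eqvD (psi_mul _ _) _; apply: der_mul.
- split; first by rewrite /= hx1 oppr0.
  by apply: eqvD (psi_inv _) _; apply: der_inv.
Qed.

Local Notation cm := (comm (@gmul B) (@ginv B)).
Local Notation wm := (@wr_mul B p).
Local Notation wi := (@wr_inv B p).

Definition cX (t : Z -> B) a : wr_car B p := ((fun i : Z => a ** L t (s (val i))), 0%R).
Definition cY b : wr_car B p := ((fun i : Z => if i == 0%R then b else e), 1%R).

Lemma construct (t : Z -> B) a b : L t (s p) = cm a b ->
  comm wm wi (cX t a) (cY b) = (t, 0%R).
Proof.
move=> H; rewrite /cX /cY /comm /wr_mul /wr_inv; cbn [fst snd]; congr (_, _); last first.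
  by rewrite oppr0 !add0r addNr.
apply: functional_extensionality => i.
rewrite oppr0 !addr0 subr0 add0r opprK.
have hv : val (i + 1)%R = (val i).+1 %% p.
  by rewrite /= (@modn_small 1 q.+2) // addn1.
have [hi|hi] : val i < q.+1 \/ val i = q.+1.
  have := ltn_ord i; rewrite ltnS leq_eqVlt => /orP [/eqP h|h]; [right|left] => //.
- have hv' : val (i + 1)%R = (val i).+1 by rewrite hv modn_small.
  have -> : ((i + 1)%R == 0%R) = false.
    by apply/negP => /eqP /(congr1 val); rewrite hv'.
  rewrite hv' LsS valZpK g_invg1 !mulg1' g_invMg -!gmulA !g_mulKg.
  done.
- have -> : (i + 1)%R = 0%R by apply: val_inj; rewrite hv hi modnn.
  rewrite eqxx hi.
  have -> : L t (s (val (0%R : Z))) = e by [].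
  have ei : inZp q.+1 = i by apply: val_inj; rewrite /= hi modn_small.
  move: H; rewrite LsS ei /comm.
  set P := L t (s q.+1) => H.
  rewrite mulg1' g_invMg -!gmulA.
  rewrite (gmulA (iv a)) -H.
  by rewrite g_mulKg.
Qed.

Definition lst : Z := inZp q.+1.
Definition dl (u : B) : wr_car B p := (fun i : Z => if i == lst then u else e, 0%R).

Lemma prod_dl l : prod_comms wm wi (wr_one B p) (map (fun uv => (dl uv.1, dl uv.2)) l)
  = dl (prod_comms (@gmul B) (@ginv B) e l).
Proof.
elim: l => [|[u v] l IH].
  rewrite /= /wr_one /dl; congr pair; apply: functional_extensionality => i.
  by case: ifP.
rewrite [LHS]/= IH [prod_comms _ _ _ (_ :: _)]/=.
rewrite /comm /wr_mul /wr_inv /dl; cbn [fst snd]; congr pair; last first.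
  by rewrite !oppr0 !addr0.
apply: functional_extensionality => i.
rewrite !oppr0 !addr0 ?subr0.
by case: ifP => _; rewrite ?g_invg1 ?gmul1 ?mulg1'.
Qed.
End W.

Theorem mainTheorem5 (B : group) (p : nat) (hp : 1 < p) (n : nat) :
  cw_le_group B n -> cw_le_wreath B p (maxn 1 n).
Proof.
case: p hp => [|[|q]] // _ hB [f s0] /derived_inv [/= h2 hD].
subst s0.
have [l [hl hL]] := hB _ hD.
case: l hl hL => [|[a b] l] hl hL.
- have H : L f (s q q.+2) = comm (@gmul B) (@ginv B) (gone B) (gone B).
    have -> : L f (s q q.+2) = psi (f, 0%R) by []. by rewrite hL /comm g_invg1 !gmul1.
  exists [:: (cX f (gone B), cY q (gone B))]; split; first exact: leq_maxl.
  have -> : forall xy, prod_comms (@wr_mul B q.+2) (@wr_inv B q.+2) (wr_one B q.+2) [:: xy]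
     = wr_mul (comm (@wr_mul B q.+2) (@wr_inv B q.+2) xy.1 xy.2) (wr_one B q.+2) by [].
  rewrite construct //= /wr_mul /wr_one; cbn [fst snd]; congr pair; last by rewrite addr0.
  by apply: functional_extensionality => i; rewrite mulg1'.
- set C := prod_comms (@gmul B) (@ginv B) (gone B) l.
  pose t := fun i => if i == lst q then gmul (f i) (ginv C) else f i.
  have Ht : L t (s q q.+2) = comm (@gmul B) (@ginv B) a b.
    have hL' : L f (s q q.+2) = gmul (comm (@gmul B) (@ginv B) a b) C := hL.
    rewrite LsS -/(lst q).
    have -> : t (lst q) = gmul (f (lst q)) (ginv C) by rewrite /t eqxx.
    rewrite (@eq_L _ _ t f); last first.
      move=> x /mapP [j]; rewrite mem_iota add0n => hj ->.
      rewrite /t; case: eqP => // /(congr1 val); rewrite /= !modn_small //.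
        by move=> h; rewrite h ltnn in hj.
      exact: leqW.
    by rewrite gmulA -LsS hL' -gmulA mulgV' mulg1'.
  exists ((cX t a, cY q b) :: map (fun uv => (dl q uv.1, dl q uv.2)) l); split.
    by rewrite /= size_map; apply: leq_trans hl (leq_maxr _ _).
  rewrite [prod_comms _ _ _ (_ :: _)]/= construct // prod_dl -/C.
  rewrite /wr_mul /dl; cbn [fst snd]; congr pair; last by rewrite addr0.
  apply: functional_extensionality => i; rewrite subr0 /t.
  by case: eqP => _; rewrite ?mulg1' // -gmulA gmulV mulg1'.
Qed.
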